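(* Let \(E\in\mathcal{B}_\infty\) be \(\sigma\)-finite for \(\mu\). Then \((E,\mu)\) is purely nonatomic.
   Context: Let $\mathcal{B}$ be the Borel $\sigma$-algebra of $\mathbb{R}$, $\lambda$ the Lebesgue measure, and $\mathcal{B}_{\infty}$ the $\sigma$-algebra on $\mathbb{R}^{\mathbb{N}}$ generated by the cylinder sets $\prod_{i=1}^{m}C_{i}\times\prod_{i=m+1}^{\infty}\mathbb{R}$ with $C_i\in\mathcal{B}$, $m\in\mathbb{N}$. Let $\mathcal{F}(\mathcal{B},\lambda)$ be the set of finite rectangles $\prod_{i\in\mathbb{N}}C_{i}$ with $C_i\in\mathcal{B}$ and $\prod_{i}\lambda(C_i)\in[0,\infty)$, with $\mathrm{vol}(\prod_{i}C_i):=\prod_i\lambda(C_i)$. The measure $\mu$ is the restriction to $\mathcal{B}_{\infty}$ of the outer measure $\mu^{\ast}(A):=\inf\{\sum_{n}\mathrm{vol}(\mathscr{C}_{n}) : \mathscr{C}_{n}\in\mathcal{F}(\mathcal{B},\lambda),\ A\subset\bigcup_{n}\mathscr{C}_{n}\}$ ($\inf\varnothing=\infty$). A measure space is purely nonatomic if it has no atoms, i.e., no measurable $A$ with positive measure such that every measurable $B\subset A$ has measure $0$ or that of $A$. *)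

(* Defs.v *)
From HB Require Import structures.
From mathcomp Require Import all_boot all_order all_algebra.
From mathcomp Require Import all_classical all_reals all_analysis.
Set Implicit Arguments. Unset Strict Implicit. Unset Printing Implicit Defensive.
Import Order.TTheory GRing.Theory Num.Theory.
Local Open Scope classical_set_scope.
Local Open Scope ring_scope.

Section Rinf.
Variable R : realType.

Definition cylinder (A : set (nat -> R)) : Prop :=
  exists (m : nat) (C : nat -> set R),
    (forall i, measurable (C i)) /\
    A = [set x | forall i, (i < m)%N -> C i (x i)].

Definition Binf : set (set (nat -> R)) := <<s cylinder >>.

Definition rect (C : nat -> set R) : set (nat -> R) :=
  [set x | forall i, C i (x i)].

Definition partial_vol (C : nat -> set R) (n : nat) : \bar R :=
  (\prod_(i < n) (@lebesgue_measure R) (C i))%E.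

Definition finrect (C : nat -> set R) (v : R) : Prop :=
  (forall i, measurable (C i)) /\ partial_vol C @ \oo --> v%:E.

(* Outer measure mu^* ; inf of the empty set is +oo. *)
Definition mu_star (A : set (nat -> R)) : \bar R :=
  ereal_inf [set s : \bar R | exists (C : nat -> nat -> set R) (v : nat -> R),
     (forall n, finrect (C n) (v n)) /\
     A `<=` \bigcup_n rect (C n) /\
     s = (\sum_(0 <= n <oo) (v n)%:E)%E].

(* mu = restriction of mu^* to B_infinity. *)
Definition sigma_finite_mu (E : set (nat -> R)) : Prop :=
  exists F : nat -> set (nat -> R),
    E = \bigcup_n F n /\ forall n, Binf (F n) /\ (mu_star (F n) < +oo)%E.

Definition purely_nonatomic (E : set (nat -> R)) : Prop :=
  ~ exists A : set (nat -> R),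
      [/\ Binf A, A `<=` E, (0 < mu_star A)%E &
        forall B, Binf B -> B `<=` A -> mu_star B = 0%E \/ mu_star B = mu_star A].

End Rinf.

(* Main.v *)
Require Import Defs.
From HB Require Import structures.
From mathcomp Require Import all_boot all_order all_algebra.
From mathcomp Require Import all_classical all_reals all_analysis.
From mathcomp Require Import ring lra.
Set Implicit Arguments. Unset Strict Implicit. Unset Printing Implicit Defensive.
Import Order.TTheory GRing.Theory Num.Theory.
Local Open Scope classical_set_scope.
Local Open Scope ring_scope.

Section Work.
Variable R : realType.
Implicit Types (A B : set (nat -> R)) (C : nat -> set R) (v : R).

Lemma BinfC A : Binf A -> Binf (~` A).
Proof. move=> hA; rewrite -setTD; exact: sigma_algebraCD. Qed.

Lemma BinfU (F : nat -> set (nat -> R)) : (forall n, Binf (F n)) -> Binf (\bigcup_n F n).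
Proof. exact: sigma_algebra_bigcup. Qed.

Lemma BinfI_seq (F : nat -> set (nat -> R)) : (forall n, Binf (F n)) -> Binf (\bigcap_n F n).
Proof.
move=> hF; rewrite -[X in Binf X]setCK setC_bigcap; apply: BinfC; apply: BinfU => n.
exact: BinfC.
Qed.

Lemma BinfI A B : Binf A -> Binf B -> Binf (A `&` B).
Proof.
move=> hA hB.
have -> : A `&` B = \bigcap_n (if n == 0%N then A else B).
  apply/seteqP; split => x.
    by move=> [xA xB] n _; case: ifP.
  by move=> h; split; [exact: (h 0%N I)|exact: (h 1%N I)].
by apply: BinfI_seq => n; case: ifP.
Qed.

Lemma Binf_rect (C : nat -> set R) : (forall i, measurable (C i)) -> Binf (rect C).
Proof.
move=> mC.
have -> : rect C = \bigcap_n [set x | forall i, (i < n)%N -> C i (x i)].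
  apply/seteqP; split => x.
    by move=> h n _ i _; exact: h.
  by move=> h i; exact: (h i.+1 I i (ltnSn i)).
apply: BinfI_seq => n; apply: sub_sigma_algebra; exists n, C; split => //.
Qed.

Local Open Scope ereal_scope.

Lemma finrect_ge0 C v : finrect C v -> (0 <= v)%R.
Proof.
case=> mC cv; rewrite -lee_fin -(cvg_lim _ cv) //.
apply: lime_ge; first exact: cvgP cv.
by near=> n; apply: prode_ge0 => i _; exact: measure_ge0.
Unshelve. all: by end_near. Qed.

Lemma mu_star_ge0 A : 0 <= mu_star A.
Proof.
apply: le_ereal_inf_tmp => s [C [v [hf [cov ->]]]].
by apply: nneseries_ge0 => n _ _; rewrite lee_fin; exact: finrect_ge0 (hf n).
Qed.

Lemma mu_star_mono A B : A `<=` B -> mu_star A <= mu_star B.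
Proof.
move=> AB; apply: ereal_inf_le_tmp => s [C [v [hf [cov ->]]]].
by exists C, v; split => //; split => //; exact: subset_trans AB cov.
Qed.

Lemma finrect0 : finrect (fun _ => @set0 R) 0%R.
Proof.
split => [i|]; first exact: measurable0.
apply: cvg_near_cst; exists 1%N => // n /= hn.
rewrite /partial_vol; case: n hn => // n _; rewrite big_ord_recl measure0 mul0e //.
Qed.

Lemma mu_star_rect A C v : finrect C v -> A `<=` rect C -> mu_star A <= v%:E.
Proof.
move=> fC AC; apply: ereal_inf_lbound.
exists (fun n => if n == 0%N then C else fun _ => set0),
       (fun n => if n == 0%N then v else 0%R); split; first by case => [|n] //=; exact: finrect0.
split; first by move=> x /AC Cx; exists 0%N.
apply/esym; apply: lim_near_cst => //; exists 1%N => // n /= hn.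
case: n hn => // n _; rewrite big_nat_recl //= big1 ?adde0 // => i _.
Qed.


Lemma null_union (B : nat -> set (nat -> R)) :
  (forall n, mu_star (B n) = 0) -> mu_star (\bigcup_n B n) = 0.
Proof.
move=> B0; apply/eqP; rewrite eq_le mu_star_ge0 andbT.
apply/lee_addgt0Pr => e e0; rewrite add0e.
have : forall n, exists CV : (nat -> nat -> set R) * (nat -> R),
    (forall k, finrect (CV.1 k) (CV.2 k)) /\ B n `<=` \bigcup_k rect (CV.1 k) /\
    \sum_(k <oo) (CV.2 k)%:E <= (e / (2 ^ n.+1)%:R)%:E.
  move=> n; have : mu_star (B n) < (e / (2 ^ n.+1)%:R)%:E.
    by rewrite B0 lte_fin divr_gt0.
  move=> /ereal_inf_lt[s [C [v [h1 [h2 ->]]]] lt].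
  by exists (C, v); split => //; split => //; exact: ltW.
move=> /choice[G HG].
have vge0 n k : (0 <= (G n).2 k)%R by exact: finrect_ge0 ((HG n).1 k).
pose W := fun p : nat * nat => ((G p.1).2 p.2)%:E.
have W0 p : 0 <= W p by rewrite lee_fin.
have /card_esym/ppcard_eqP[f] := card_nat2.
apply: (@le_trans _ _ (\esum_(i in setT) W i)).
  apply: ereal_inf_lbound => /=.
  exists (fun i => (G (f i).1).1 (f i).2), (fun i => (G (f i).1).2 (f i).2).
  split; first by move=> i; exact: ((HG (f i).1).1 (f i).2).
  split.
    move=> t [i _ /((HG i).2.1)[j _ Bijt]]; exists (f^-1%FUN (i, j)) => //=.
    by rewrite invK ?inE.
  rewrite -(esum_pred_image W _ xpredT) ?[fun=> _]set_true//.
  congr esum; apply/seteqP; split => // p _; exists (f^-1%FUN p) => //.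
  by rewrite invK ?inE.
rewrite (_ : esum _ _ = \sum_(i <oo) \sum_(j <oo ) W (i, j)); last first.
  pose J : nat -> set (nat * nat) := fun i => [set (i, j) | j in setT].
  rewrite (_ : setT = \bigcup_k J k); last first.
    by rewrite predeqE => -[a b]; split => // _; exists a => //; exists b.
  rewrite esum_bigcupT /=; last 2 first.
    - apply/trivIsetP => i j _ _ ij.
      rewrite predeqE => -[n m] /=; split => //= -[] [_] _ [<-{n} _].
      by move=> [m' _] [] /esym/eqP; rewrite (negbTE ij).
    - by move=> p; exact: W0.
  rewrite -(image_id [set: nat]) -fun_true esum_pred_image//; last first.
    by move=> n _; exact: esum_ge0.
  apply: eq_eseriesr => /= j _.
  rewrite -(esum_pred_image W (pair j) predT)//=; last first.
    by move=> ? ? _ _; exact: (@can_inj _ _ _ snd).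
  by congr esum; rewrite predeqE => -[a b]; split; move=> [i _ <-]; exists i.
apply: le_trans (epsilon_trick0 xpredT (ltW e0)).
apply: lee_nneseries => [n _ _|n _]; first by apply: nneseries_ge0 => k _ _; exact: W0.
exact: (HG n).2.2.
Qed.


Definition T (d : R) (k : nat) : set R :=
  `[(k%:R * d)%R, (k.+1%:R * d)%R] `|` `[(- (k.+1%:R * d))%R, (- (k%:R * d))%R].

Lemma T_meas d k : measurable (T d k).
Proof. by apply: measurableU; exact: measurable_itv. Qed.

Lemma T_small d k : (0 < d)%R -> lebesgue_measure (T d k) <= (d + d)%:E.
Proof.
move=> d0; rewrite /T; apply: le_trans (@measureU2 _ (measurableTypeR R) R lebesgue_measure _ _ (measurable_itv _) (measurable_itv _)) _.
change (lebesgue_measure `[(k%:R * d)%R, (k.+1%:R * d)%R] +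
  lebesgue_measure `[(- (k.+1%:R * d))%R, (- (k%:R * d))%R] <= (d + d)%:E).
rewrite !lebesgue_measure_itv /= !lte_fin.
have h1 : (k%:R * d < k.+1%:R * d)%R by rewrite ltr_pM2r // ltr_nat.
have h2 : (- (k.+1%:R * d) < - (k%:R * d))%R by rewrite ltrN2.
rewrite h1 h2 -!EFinD lee_fin -[k.+1]addn1 natrD mulrDl mul1r.
lra.
Qed.


Lemma T_cover d x : (0 < d)%R -> exists k, T d k x.
Proof.
move=> d0; have [k /andP[h1 h2]] : exists k : nat, (k%:R <= `|x| / d < k.+1%:R)%R.
  by eexists; apply: truncn_itv; rewrite divr_ge0 // ltW.
exists k.
rewrite ler_pdivlMr // in h1; rewrite ltr_pdivrMr // in h2.
rewrite /T; case: (leP 0%R x) => hx.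
  left; rewrite ger0_norm // in h1 h2; rewrite /= in_itv /=; apply/andP; split => //.
  exact: ltW.
right; rewrite ltr0_norm // in h1 h2; rewrite /= in_itv /=; apply/andP; split; lra.
Qed.


Lemma lim_zero (u : nat -> \bar R) (l : R) :
  u @ \oo --> l%:E -> (\forall n \near \oo, u n = 0) -> l = 0%R.
Proof.
move=> cu hz; have : limn u = l%:E by apply: cvg_lim.
rewrite (lim_near_cst _ hz) //.
by move=> [->].
Qed.

Lemma split_rect C v eps : finrect C v -> (0 < v)%R -> (0 < eps)%R ->
  exists D : nat -> nat -> set R, exists w : nat -> R,
   (forall k, finrect (D k) (w k)) /\ (forall k, (w k < eps)%R) /\
   rect C `<=` \bigcup_k rect (D k).
Proof.
move=> fC v0 e0; have [mC cv] := fC.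
pose Q n := \prod_(i < n) (@lebesgue_measure R) (C i.+1).
have Q0 n : 0 <= Q n by apply: prode_ge0 => i _; exact: measure_ge0.
have pvS n : partial_vol C n.+1 = lebesgue_measure (C 0%N) * Q n.
  by rewrite /partial_vol big_ord_recl.
have cvS : (fun n => partial_vol C n.+1) @ \oo --> v%:E.
  by rewrite (cvg_shiftS (partial_vol C)).
have [a [la a0]] : exists a : R, lebesgue_measure (C 0%N) = a%:E /\ (0 < a)%R.
  case hl : (lebesgue_measure (C 0%N)) => [a| |].
  - exists a; split => //; rewrite lt_neqAle.
    have : 0 <= a%:E by rewrite -hl measure_ge0.
    rewrite lee_fin => ->; rewrite andbT; apply/eqP => a0; subst a.
    have : v = 0%R.
      apply: (lim_zero cvS); exists 0%N => // n _ /=; by rewrite pvS hl mul0e.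
    by move=> v00; rewrite v00 ltxx in v0.
  - have [fin _] := (fine_cvgP _ _).1 cvS.
    have : v = 0%R.
      apply: (lim_zero cvS); apply: filterS fin => n /=.
      rewrite pvS hl; have := Q0 n; rewrite le_eqVlt => /orP[/eqP <-|Qp].
        by rewrite mule0.
      by rewrite gt0_mulye.
    by move=> v00; rewrite v00 ltxx in v0.
  - have : 0 <= lebesgue_measure (C 0%N) by exact: measure_ge0.
    by rewrite hl.
have cvQ : Q @ \oo --> (v / a)%:E.
  have -> : Q = (fun n => (a^-1)%:E * partial_vol C n.+1).
    apply: funext => n; rewrite pvS la muleA -EFinM mulVf ?mul1e //.
    by rewrite gt_eqF.
  rewrite (_ : (v / a)%:E = (a^-1)%:E * v%:E); last by rewrite -EFinM mulrC.
  exact: cvgeZl.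
pose d := (eps * a / (4%:R * v))%R.
have d0 : (0 < d)%R by rewrite /d; apply: divr_gt0; [exact: mulr_gt0|apply: mulr_gt0 => //; exact: ltr0Sn].
pose b k := (@lebesgue_measure R) (C 0%N `&` T d k).
have hb k : 0 <= b k <= (d + d)%:E.
  rewrite measure_ge0 /=; apply: le_trans (T_small k d0).
  apply: le_measure; rewrite ?inE; [exact: measurableI (mC 0%N) (T_meas _ _)|exact: T_meas|].
  exact: subIsetr.
have bE k : b k = (fine (b k))%:E.
  have /andP[h1 h2] := hb k; rewrite fineK // ge0_fin_numE //.
  exact: le_lt_trans h2 (ltry _).
exists (fun k i => if i == 0%N then C 0%N `&` T d k else C i),
       (fun k => fine (b k) * (v / a))%R.
split; [|split].
- move=> k; split => [i|].
    by case: ifP => _; [exact: measurableI (mC 0%N) (T_meas _ _)|exact: mC].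
  rewrite -(cvg_shiftS (partial_vol _)).
  have -> : (fun n => partial_vol (fun i => if i == 0%N then C 0%N `&` T d k else C i) n.+1)
      = (fun n => (fine (b k))%:E * Q n).
    by apply: funext => n; rewrite /partial_vol big_ord_recl /= -bE.
  have h : (fun n => (fine (b k))%:E * Q n) @ \oo --> ((fine (b k))%:E * (v/a)%:E).
    exact: cvgeZl.
  rewrite -EFinM in h; exact: h.
- move=> k; have /andP[h1 h2] := hb k; rewrite bE !lee_fin in h1 h2.
  apply: (le_lt_trans (y := ((d + d) * (v / a))%R)).
    by rewrite ler_wpM2r // divr_ge0 // ltW.
  have -> : ((d + d) * (v / a) = eps / 2%:R)%R.
    rewrite /d; field; apply/andP; split; rewrite ?gt_eqF //.
  lra.
- move=> x Cx; have [k Tk] := T_cover (x 0%N) d0; exists k => // i.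
  by case: ifP => [/eqP ->|_]; [split|exact: Cx i].
Qed.


Lemma null_sub A (B : nat -> set (nat -> R)) :
  A `<=` \bigcup_n B n -> (forall n, mu_star (B n) = 0) -> mu_star A = 0.
Proof.
move=> AB B0; apply/eqP; rewrite eq_le mu_star_ge0 andbT.
by rewrite -(null_union B0); exact: mu_star_mono.
Qed.

End Work.

Local Open Scope ereal_scope.

Theorem corollaryA6 (R : realType) (E : set (nat -> R)) :
  Binf E -> sigma_finite_mu E -> purely_nonatomic E.
Proof.
move=> _ [F [EF hF]] [A [mA AE Apos atom]].
have atom0 B : Binf B -> B `<=` A -> mu_star B < mu_star A -> mu_star B = 0.
  move=> mB BA lt; case: (atom B mB BA) => // eq.
  by rewrite eq ltxx in lt.
suff : mu_star A = 0 by move=> A0; rewrite A0 ltxx in Apos.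
have Afin : mu_star A < +oo.
  rewrite ltNge leye_eq; apply/negP => /eqP Aoo.
  suff : mu_star A = 0 by move=> A0; rewrite A0 ltxx in Apos.
  apply: (@null_sub _ _ (fun n => A `&` F n)).
    move=> x Ax; have := AE x Ax; rewrite EF => -[n _ Fx]; exists n => //.
  move=> n; apply: atom0; [exact: BinfI mA (hF n).1|exact: subIsetl|].
  rewrite Aoo; apply: le_lt_trans (mu_star_mono (@subIsetr _ A (F n))) _.
  exact: (hF n).2.
have [m Am] : exists m : R, mu_star A = m%:E.
  by exists (fine (mu_star A)); rewrite fineK // ge0_fin_numE // mu_star_ge0.
have m0 : (0 < m)%R by rewrite -lte_fin -Am.
have /ereal_inf_lt[s [C [v [h1 [h2 _]]]] _] := Afin.
apply: (@null_sub _ _ (fun n => A `&` rect (C n))).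
  by move=> x Ax; have [n _ Cx] := h2 x Ax; exists n.
move=> n; case: (ltP (v n) m) => vm.
  apply: atom0; [exact: BinfI mA (Binf_rect (h1 n).1)|exact: subIsetl|].
  rewrite Am; apply: le_lt_trans (mu_star_rect (h1 n) (@subIsetr _ A _)) _.
  by rewrite lte_fin.
have [D [w [hD [hw cov]]]] := split_rect (h1 n) (lt_le_trans m0 vm) m0.
apply: (@null_sub _ _ (fun k => A `&` rect (D k))).
  by move=> x [Ax /cov[k _ Dx]]; exists k.
move=> k; apply: atom0; [exact: BinfI mA (Binf_rect (hD k).1)|exact: subIsetl|].
rewrite Am; apply: le_lt_trans (mu_star_rect (hD k) (@subIsetr _ A _)) _.
by rewrite lte_fin.
Qed.
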